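(* Let $0<r\le 1/2$, $0\le\rho\le 1$, and let $\alpha$ satisfy $0\le\alpha<r$, with $\alpha$ the asymptotic red edge fraction of the Biased Preferential Attachment Model described in the context. Define $$K_B=\frac12\left(\frac{r\rho}{\alpha+\rho(1-\alpha)}+\frac{1-r}{\alpha\rho+1-\alpha}\right),\qquad K_R=\frac12\left(\frac{r}{\alpha+\rho(1-\alpha)}+\frac{\rho(1-r)}{\alpha\rho+1-\alpha}\right),$$ and $\beta_B=1+1/K_B$, $\beta_R=1+1/K_R$. Then $$\frac{1}{\beta_R-1}>\frac{2}{\beta_B-1}-1,$$ equivalently $2K_B-1<K_R$.
   Context: In the BPAM, nodes arrive sequentially and are labeled red with probability $r$ (minority, $0<r\le1/2$) or blue with probability $1-r$. Each new node attaches by preferential attachment, with a cross-label edge accepted only with probability $\rho\in[0,1]$ (retrying otherwise), and every node has outdegree $d$. $\alpha$ denotes the limit as $N\to\infty$ of the expected fraction of the total degree $2Nd$ belonging to red nodes. It satisfies the power inequality $\alpha<r$. $\beta_B$ and $\beta_R$ are the power-law exponents of the asymptotic degree distributions of the blue and red communities, respectively. *)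

(* Defs.v *)
From Stdlib Require Import Reals Lra.
Open Scope R_scope.

(* Constants K_B, K_R of the BPAM degree-distribution exponents,
   as functions of r (minority fraction), rho (acceptance probability)
   and alpha (asymptotic red edge fraction). *)
Definition K_B (r rho alpha : R) : R :=
  / 2 * (r * rho / (alpha + rho * (1 - alpha)) + (1 - r) / (alpha * rho + 1 - alpha)).

Definition K_R (r rho alpha : R) : R :=
  / 2 * (r / (alpha + rho * (1 - alpha)) + rho * (1 - r) / (alpha * rho + 1 - alpha)).

Definition beta_B (r rho alpha : R) : R := 1 + / K_B r rho alpha.
Definition beta_R (r rho alpha : R) : R := 1 + / K_R r rho alpha.

(* Main.v *)
Require Import Defs.
From Stdlib Require Import Reals Lra Psatz.
Open Scope R_scope.

Lemma poly (r rho a : R) : 0 < r -> r <= /2 -> 0 <= rho -> rho <= 1 -> 0 <= a -> a < r ->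
  0 < r*(1-2*rho)*(a*rho+1-a) + (1-r)*(rho-2)*(a+rho*(1-a)) + 2*(a+rho*(1-a))*(a*rho+1-a).
Proof. intros.
assert (0 <= (r-a)*rho) by nra.
assert (0 <= (/2-r)*rho) by nra.
assert (0 <= (1-rho)*rho) by nra.
assert (0 <= (r-a)*(1-rho)) by nra.
assert (0 <= (/2-r)*a) by nra.
assert (0 <= a*rho) by nra.
nra. Qed.

Theorem proposition5 (r rho alpha : R) :
  0 < r -> r <= / 2 -> 0 <= rho -> rho <= 1 -> 0 <= alpha -> alpha < r ->
  / (beta_R r rho alpha - 1) > 2 / (beta_B r rho alpha - 1) - 1.
Proof.
  intros H1 H2 H3 H4 H5 H6.
  unfold beta_R, beta_B.
  replace (1 + / K_R r rho alpha - 1) with (/ K_R r rho alpha) by ring.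
  replace (1 + / K_B r rho alpha - 1) with (/ K_B r rho alpha) by ring.
  unfold Rdiv. rewrite !Rinv_inv.
  unfold K_R, K_B. unfold Rdiv.
  assert (HD2 : 0 < alpha * rho + 1 - alpha) by nra.
  destruct (Req_dec (alpha + rho * (1 - alpha)) 0) as [HD1|HD1].
  - rewrite HD1. assert (rho = 0) by nra. assert (alpha = 0) by nra. subst.
    unfold Rdiv. rewrite Rinv_0.
    replace (0 * 0 + 1 - 0) with 1 by ring. rewrite Rinv_1. lra.
  - assert (HD1' : 0 < alpha + rho * (1 - alpha)) by nra.
    pose proof (poly r rho alpha H1 H2 H3 H4 H5 H6) as P.
    set (D1 := alpha + rho * (1 - alpha)) in *.
    set (D2 := alpha * rho + 1 - alpha) in *.
    apply Rminus_gt_0_lt.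
    replace (/ 2 * (r * / D1 + rho * (1 - r) * / D2) -
      (2 * (/ 2 * (r * rho * / D1 + (1 - r) * / D2)) - 1))
      with ((r*(1-2*rho)*D2 + (1-r)*(rho-2)*D1 + 2*D1*D2) * / (2*D1*D2))
      by (field; lra).
    apply Rmult_lt_0_compat; [exact P|].
    apply Rinv_0_lt_compat. nra.
Qed.
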